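(* Let $S$ be a profinite group with $H^2(S)=0$ and $S^{[2]}\cong(\mathbb{Z}/q)^I$ for some set $I$. Then there is an exact sequence \[0\to H^2(S^{[2]})_{\mathrm{dec}}\hookrightarrow H^2(S^{[2]})\xrightarrow{\prod_C\delta\,\mathrm{res}_C}\prod_C H^2(C),\] where $C$ ranges over all cyclic subgroups of $S^{[2]}$ of order $q$.
   Context: $p$ prime, $q=p^s$; $H^i(\cdot)=H^i(\cdot,\mathbb{Z}/q)$ with trivial action; $S^{(2)}=S^q[S,S]$, $S^{[2]}=S/S^{(2)}$; $H^2(\cdot)_{\mathrm{dec}}$ is the image of the cup product $H^1\otimes H^1\to H^2$; $\delta=1$ if $p>2$, $\delta=2$ if $p=2$; $\mathrm{res}_C$ is restriction to the subgroup $C$. *)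

(* Defs.v *)
From HB Require Import structures.
From mathcomp Require Import all_boot all_algebra.
From mathcomp Require Import boolp classical_sets topology.
From Stdlib Require List.
Set Implicit Arguments. Unset Strict Implicit. Unset Printing Implicit Defensive.
Import GRing.Theory.
Local Open Scope ring_scope.
Local Open Scope classical_set_scope.

Definition is_group {T : Type} (mul : T -> T -> T) (inv : T -> T) (one : T) :=
  [/\ forall x y z, mul x (mul y z) = mul (mul x y) z,
      forall x, mul one x = x & forall x, mul (inv x) x = one].

Definition is_profinite_group (T : topologicalType)
    (mul : T -> T -> T) (inv : T -> T) (one : T) :=
  [/\ is_group mul inv one,
      continuous (fun pq : T * T => mul pq.1 pq.2),
      continuous inv,
      compact [set: T] &
      hausdorff_space T /\ totally_disconnected [set: T]].

Definition gpow {T : Type} (mul : T -> T -> T) (one : T) (x : T) (n : nat) : T :=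
  iter n (mul x) one.
Definition gcomm {T : Type} (mul : T -> T -> T) (inv : T -> T) (x y : T) : T :=
  mul (mul (inv x) (inv y)) (mul x y).

Definition is_subgroup {T : Type} (mul : T -> T -> T) (inv : T -> T) (one : T)
    (H : set T) :=
  [/\ H one, forall x y, H x -> H y -> H (mul x y) & forall x, H x -> H (inv x)].

Definition gen_subgroup {T : Type} (mul : T -> T -> T) (inv : T -> T) (one : T)
    (A : set T) : set T :=
  \bigcap_(H in [set H | is_subgroup mul inv one H /\ A `<=` H]) H.

Definition S2 (T : topologicalType) (mul : T -> T -> T) (inv : T -> T) (one : T)
    (q : nat) : set T :=
  closure (gen_subgroup mul inv one
    [set y | (exists x, y = gpow mul one x q) \/ (exists x z, y = gcomm mul inv x z)]).

(* continuity into a discrete space = all fibres are open *)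
Definition cont1 (T : topologicalType) (A : Type) (f : T -> A) :=
  forall a, open (f @^-1` [set a]).
Definition cont2 (T : topologicalType) (A : Type) (f : T -> T -> A) :=
  forall a, open ((fun pq : T * T => f pq.1 pq.2) @^-1` [set a]).

(* inhomogeneous 2-cocycles / 2-coboundaries, trivial action *)
Definition cocycle2 {G : Type} (add : G -> G -> G) {M : zmodType} (f : G -> G -> M) :=
  forall x y z, f y z - f (add x y) z + f x (add y z) - f x y = 0.
Definition is_cobound2 {G : Type} (add : G -> G -> G) {M : zmodType}
    (f : G -> G -> M) (b : G -> M) :=
  forall x y, f x y = b x + b y - b (add x y).

Definition H2_vanishes (T : topologicalType) (mul : T -> T -> T) (q : nat) :=
  forall f : T -> T -> 'Z_q, cont2 f -> cocycle2 mul f ->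
    exists b : T -> 'Z_q, cont1 b /\ is_cobound2 mul f b.

Definition gadd (I : Type) (q : nat) (x y : I -> 'Z_q) : I -> 'Z_q :=
  fun i => x i + y i.
Definition gzero (I : Type) (q : nat) : I -> 'Z_q := fun _ => 0.
Definition gscale (I : Type) (q : nat) (g : I -> 'Z_q) (k : nat) : I -> 'Z_q :=
  fun i => g i *+ k.

(* continuity into discrete Z/q for the product topology on (Z/q)^I
   (discrete factors): locally the value depends on finitely many coordinates *)
Definition contG1 (I : Type) (q : nat) (f : (I -> 'Z_q) -> 'Z_q) :=
  forall x, exists J : seq I, forall x',
    (forall i, List.In i J -> x' i = x i) -> f x' = f x.
Definition contG2 (I : Type) (q : nat) (f : (I -> 'Z_q) -> (I -> 'Z_q) -> 'Z_q) :=
  forall x y, exists J : seq I, forall x' y',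
    (forall i, List.In i J -> x' i = x i /\ y' i = y i) -> f x' y' = f x y.

(* continuous homomorphisms (Z/q)^I -> Z/q, i.e. elements of H^1 *)
Definition homG1 (I : Type) (q : nat) (f : (I -> 'Z_q) -> 'Z_q) :=
  contG1 f /\ forall x y, f (gadd x y) = f x + f y.

(* pi : S -> (Z/q)^I realises S^[2] = S/S^(2) ~= (Z/q)^I :
   a continuous surjective homomorphism with kernel S^(2) *)
Definition S2_quotient_map (T : topologicalType) (mul : T -> T -> T) (inv : T -> T)
    (one : T) (I : Type) (q : nat) (pi : T -> I -> 'Z_q) :=
  [/\ forall x y, pi (mul x y) = gadd (pi x) (pi y),
      forall i (a : 'Z_q), open [set x | pi x i = a],
      forall y, exists x, pi x = y
    & [set x | pi x = @gzero I q] = S2 mul inv one q].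

Definition order_q (I : Type) (q : nat) (g : I -> 'Z_q) :=
  gscale g q = @gzero I q /\ forall k, (0 < k < q)%N -> gscale g k <> @gzero I q.

(* the class of f restricted to C = <g> is zero in H^2(C, Z/q) *)
Definition res_cyc_zero (I : Type) (q : nat) (g : I -> 'Z_q)
    (f : (I -> 'Z_q) -> (I -> 'Z_q) -> 'Z_q) :=
  exists b : (I -> 'Z_q) -> 'Z_q, forall a c : nat,
    f (gscale g a) (gscale g c) = b (gscale g a) + b (gscale g c) - b (gscale g (a + c)).

(* the class of f lies in H^2_dec: it is a sum of cup products chi cup psi of
   elements of H^1, (chi cup psi)(x,y) = chi(x) psi(y), up to a continuous coboundary *)
Definition decomposable (I : Type) (q : nat) (f : (I -> 'Z_q) -> (I -> 'Z_q) -> 'Z_q) :=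
  exists (cs : seq (((I -> 'Z_q) -> 'Z_q) * ((I -> 'Z_q) -> 'Z_q)))
         (b : (I -> 'Z_q) -> 'Z_q),
    [/\ forall c, List.In c cs -> homG1 c.1 /\ homG1 c.2,
        contG1 b
      & forall x y, f x y = \sum_(c <- cs) c.1 x * c.2 y + (b x + b y - b (gadd x y))].

Definition delta (p : nat) : nat := if p == 2%N then 2%N else 1%N.

(* Main.v *)
Require Import Defs.
From HB Require Import structures.
From mathcomp Require Import all_boot all_algebra.
From mathcomp Require Import boolp classical_sets topology.
From Stdlib Require List.
From mathcomp Require Import ring.
Import GRing.Theory.
Local Open Scope ring_scope.
Set Implicit Arguments. Unset Strict Implicit. Unset Printing Implicit Defensive.

Section Gen.
Variables (I : Type) (q : nat).
Hypothesis Hq : (1 < q)%N.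
Local Notation R := 'Z_q.
Local Notation A := (I -> 'Z_q).
Local Notation add := (@gadd I q).
Local Notation zero := (@gzero I q).

Lemma qR0 : (q%:R : R) = 0.
Proof. exact: pchar_Zp. Qed.

Lemma mulrn_q (x : R) : x *+ q = 0.
Proof. by rewrite -mulr_natr qR0 mulr0. Qed.

Lemma gaddC (x y : A) : add x y = add y x.
Proof. apply: funext => i; exact: addrC. Qed.
Lemma gaddA (x y z : A) : add x (add y z) = add (add x y) z.
Proof. apply: funext => i; exact: addrA. Qed.
Lemma gadd0 (x : A) : add x zero = x.
Proof. apply: funext => i; exact: addr0. Qed.
Lemma gadd0l (x : A) : add zero x = x.
Proof. apply: funext => i; exact: add0r. Qed.
Lemma gscale0 (x : A) : gscale x 0 = zero.
Proof. by apply: funext => i. Qed.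
Lemma gscaleS (x : A) n : gscale x n.+1 = add x (gscale x n).
Proof. by apply: funext => i; rewrite /gscale /gadd mulrS. Qed.
Lemma gscaleD (x : A) n m : gscale x (n + m) = add (gscale x n) (gscale x m).
Proof. by apply: funext => i; rewrite /gscale /gadd mulrnDr. Qed.
Lemma gscaleq (x : A) : gscale x q = zero.
Proof. by apply: funext => i; rewrite /gscale mulrn_q. Qed.
Lemma gscale_mod (x : A) n : gscale x (n %% q) = gscale x n.
Proof.
rewrite {2}(divn_eq n q) gscaleD; apply: funext => i.
by rewrite /gscale /gadd mulrnA mulrn_q add0r.
Qed.

Definition addF (F : A -> R) := forall x y, F (add x y) = F x + F y.

Lemma add_zero F : addF F -> F zero = 0.
Proof.
move=> hF; have h := hF zero zero; rewrite gadd0 in h.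
by apply: (addrI (F zero)); rewrite addr0 -h.
Qed.

Lemma add_scale F : addF F -> forall x n, F (gscale x n) = F x *+ n.
Proof.
move=> hF x; elim=> [|n IH]; first by rewrite gscale0 add_zero.
by rewrite gscaleS hF IH mulrS.
Qed.

Definition bilin (B : A -> A -> R) :=
  (forall y, addF (B^~ y)) /\ (forall x, addF (B x)).

Lemma bilin_cocycle B : bilin B -> cocycle2 add B.
Proof.
move=> [hl hr] x y z; rewrite hl hr.
by ring.
Qed.


Lemma natr_mod n : (n%:R : R) = (n %% q)%:R.
Proof. by rewrite {1}(divn_eq n q) natrD natrM qR0 mulr0 add0r. Qed.

Lemma gscale_inj_aux (g : A) a b : order_q g -> (a < b < q)%N ->
  gscale g a <> gscale g b.
Proof.
move=> [_ hg] /andP[hab hbq] E.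
have hb : b = (a + (b - a))%N by rewrite subnKC // ltnW.
move: E; rewrite hb gscaleD => E.
apply: (hg (b - a)%N); first by rewrite subn_gt0 hab /= (leq_ltn_trans (leq_subr _ _)).
apply: funext => i; have := congr1 (fun v => v i) E; rewrite /gadd /gzero /=.
by move/eqP; rewrite -{1}(addr0 (gscale g a i)) eq_sym (inj_eq (addrI _)) => /eqP.
Qed.

Lemma order_q_eq (g : A) a b : order_q g -> gscale g a = gscale g b ->
  (a%:R : R) = b%:R.
Proof.
move=> hg E; rewrite natr_mod [RHS]natr_mod; congr (_%:R).
rewrite -gscale_mod -[gscale g b]gscale_mod in E.
have ha := ltn_pmod a (ltnW Hq); have hb := ltn_pmod b (ltnW Hq).
case: (ltngtP (a %% q) (b %% q)) => // h.
- by exfalso; apply: (gscale_inj_aux hg _ E); rewrite h hb.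
- by exfalso; apply: (gscale_inj_aux hg _ (esym E)); rewrite h ha.
Qed.

Lemma hom_add (c : A -> R) : homG1 c -> addF c.
Proof. by case. Qed.

Lemma sum_cs_scale (cs : seq ((A -> R) * (A -> R))) (g : A) a c :
  (forall c0, List.In c0 cs -> homG1 c0.1 /\ homG1 c0.2) ->
  \sum_(c0 <- cs) c0.1 (gscale g a) * c0.2 (gscale g c) =
  (\sum_(c0 <- cs) c0.1 g * c0.2 g) * (a * c)%:R.
Proof.
elim: cs => [|c0 cs IH] H; first by rewrite !big_nil mul0r.
rewrite !big_cons IH; last by move=> c1 hc1; apply: H; right.
have [h1 h2] := H c0 (or_introl erefl).
rewrite (add_scale (hom_add h1)) (add_scale (hom_add h2)) mulrDl.
rewrite -[_ * (a * c)%:R]/(_) natrM.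
by rewrite -[c0.1 g *+ a]mulr_natr -[c0.2 g *+ c]mulr_natr mulrACA.
Qed.

Lemma backward (d : nat) (h2 : R) (Hh : h2 *+ 2 = d%:R)
  (f : A -> A -> R) : decomposable f ->
  forall g, order_q g -> res_cyc_zero g (fun x y => f x y *+ d).
Proof.
move=> [cs [b0 [hcs _ hf]]] g hg.
pose u := \sum_(c <- cs) c.1 g * c.2 g.
have Hf : forall a c, f (gscale g a) (gscale g c) =
   u * (a * c)%:R + (b0 (gscale g a) + b0 (gscale g c) - b0 (gscale g (a + c))).
  by move=> a c; rewrite hf -gscaleD sum_cs_scale.
pose kk (y : A) : nat := match pselect (exists a, y = gscale g a) with
  | left H => proj1_sig (cid H) | right _ => 0%N end.
have Hkk : forall a, ((kk (gscale g a))%:R : R) = a%:R.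
  move=> a; rewrite /kk; case: pselect => [H|H]; last by exfalso; apply: H; exists a.
  by case: (cid H) => k /= hk; rewrite (order_q_eq hg hk).
exists (fun y => b0 y *+ d - u * h2 * (kk y)%:R ^+ 2) => a c.
have hd : forall x : R, x *+ d = x * (h2 *+ 2) by move=> x; rewrite Hh mulr_natr.
rewrite Hf !Hkk !hd natrD natrM.
ring.
Qed.

Definition e (j : I) : A := fun i => if pselect (i = j) then 1 else 0.
Definition sing (j : I) (r : R) : A := fun i => if pselect (i = j) then r else 0.
Definition cut (j : I) (x : A) : A := fun i => if pselect (i = j) then 0 else x i.
Definition pr (L : seq I) (x : A) : A :=
  fun i => if pselect (List.In i L) then x i else 0.
Definition gsub (x y : A) : A := fun i => x i - y i.
Definition inU (L : seq I) (u : A) := forall i, List.In i L -> u i = 0.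
Definition agree (L : seq I) (x y : A) := forall i, List.In i L -> x i = y i.
Definition loc (L : seq I) (F : A -> R) := forall x y, agree L x y -> F x = F y.

Lemma selT (P : Prop) (T0 : Type) (a b : T0) : P -> (if pselect P then a else b) = a.
Proof. by case: pselect. Qed.
Lemma selF (P : Prop) (T0 : Type) (a b : T0) : ~ P -> (if pselect P then a else b) = b.
Proof. by case: pselect. Qed.

Lemma sing_scale j (r : R) : sing j r = gscale (e j) r.
Proof.
apply: funext => i; rewrite /sing /gscale /e; case: pselect => h.
  by rewrite natr_Zp.
by rewrite mul0rn.
Qed.

Lemma add_sing F j r : addF F -> F (sing j r) = r * F (e j).
Proof. by move=> hF; rewrite sing_scale (add_scale hF) -mulr_natr natr_Zp mulrC. Qed.

Lemma cut_add j x y : cut j (add x y) = add (cut j x) (cut j y).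
Proof. by apply: funext => i; rewrite /cut /gadd; case: pselect => h; rewrite ?addr0. Qed.

Lemma pr_add L x y : pr L (add x y) = add (pr L x) (pr L y).
Proof. by apply: funext => i; rewrite /pr /gadd; case: pselect => h; rewrite ?addr0. Qed.

Lemma pr_nil x : pr [::] x = zero.
Proof. by apply: funext => i; rewrite /pr; case: pselect => h. Qed.

Lemma pr_cons j L x : pr (j :: L) x = add (sing j (x j)) (pr L (cut j x)).
Proof.
apply: funext => i; rewrite /pr /sing /cut /gadd.
case: (pselect (i = j)) => hij.
  rewrite (selT _ _ (or_introl (esym hij) : List.In i (j :: L))) /=.
  by case: pselect => h; rewrite addr0 hij.
rewrite /= add0r; case: (pselect (List.In i L)) => hL.
  by rewrite (selT _ _ (or_intror hL : List.In i (j :: L))).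
by rewrite selF //; case=> // h; apply: hij.
Qed.

Lemma pr_inU L u : inU L u -> pr L u = zero.
Proof. by move=> hu; apply: funext => i; rewrite /pr; case: pselect => h0 /=; [exact: hu|]. Qed.

Lemma pr_agree L x y : agree L x y -> pr L x = pr L y.
Proof. by move=> h; apply: funext => i; rewrite /pr; case: pselect => h0 /=; [exact: h|]. Qed.

Lemma decomp L x : x = add (pr L x) (gsub x (pr L x)).
Proof. by apply: funext => i; rewrite /gadd /gsub addrC subrK. Qed.

Lemma inU_sub L x : inU L (gsub x (pr L x)).
Proof. by move=> i hi; rewrite /gsub /pr; case: pselect => h0 /=; [rewrite subrr|]. Qed.

Lemma agree_cut L j x y : agree L x y -> agree L (cut j x) (cut j y).
Proof. by move=> h i hi; rewrite /cut; case: pselect => h0 /=; [|apply: h]. Qed.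

Lemma inU_cut L j u : inU L u -> inU L (cut j u).
Proof. by move=> h i hi; rewrite /cut; case: pselect => h0 /=; [|apply: h]. Qed.

Lemma cut_inU j L u : inU (j :: L) u -> inU L (cut j u).
Proof. by move=> h i hi; rewrite /cut; case: pselect => h0 /=; [|apply: h; right]. Qed.

Lemma agree_cons j L x y : agree (j :: L) x y -> agree L (cut j x) (cut j y).
Proof. by move=> h i hi; rewrite /cut; case: pselect => h0 /=; [|apply: h; right]. Qed.

Lemma agree_catl L1 L2 x y : agree (L1 ++ L2) x y -> agree L1 x y.
Proof. by move=> h i hi; apply: h; apply: List.in_or_app; left. Qed.
Lemma agree_catr L1 L2 x y : agree (L1 ++ L2) x y -> agree L2 x y.
Proof. by move=> h i hi; apply: h; apply: List.in_or_app; right. Qed.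
Lemma inU_catl L1 L2 x : inU (L1 ++ L2) x -> inU L1 x.
Proof. by move=> h i hi; apply: h; apply: List.in_or_app; left. Qed.
Lemma inU_catr L1 L2 x : inU (L1 ++ L2) x -> inU L2 x.
Proof. by move=> h i hi; apply: h; apply: List.in_or_app; right. Qed.

Lemma loc_cont L F : loc L F -> contG1 F.
Proof. by move=> h x; exists L => x' hx'; apply: h => i /hx'. Qed.

End Gen.


Section CS.
Variables (I : Type) (q : nat).
Hypothesis Hq : (1 < q)%N.
Local Notation R := 'Z_q.
Local Notation A := (I -> 'Z_q).
Local Notation add := (@gadd I q).
Local Notation zero := (@gzero I q).

Definition sumcs (cs : seq ((A -> R) * (A -> R))) (x y : A) : R :=
  \sum_(c <- cs) c.1 x * c.2 y.

Definition Pgood (L : seq I) (c : (A -> R) * (A -> R)) :=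
  [/\ homG1 c.1, homG1 c.2, loc L c.1, loc L c.2 & forall u, inU L u -> c.1 u = 0].

Lemma sumcs_bilin cs : (forall c, List.In c cs -> homG1 c.1 /\ homG1 c.2) ->
  bilin (sumcs cs).
Proof.
elim: cs => [|c cs IH] H.
  by split=> ? ? ?; rewrite /sumcs !big_nil addr0.
have [h1 h2] := H c (or_introl erefl).
have [IH1 IH2] := IH (fun c0 h => H c0 (or_intror h)).
split=> a x y; rewrite /sumcs !big_cons.
- rewrite (hom_add h1) mulrDl -!/(sumcs _ _ _) IH1; ring.
- rewrite (hom_add h2) mulrDr -!/(sumcs _ _ _) IH2; ring.
Qed.

Lemma sumcs_loc L cs : (forall c, List.In c cs -> Pgood L c) ->
  forall x y x' y', agree L x x' -> agree L y y' -> sumcs cs x y = sumcs cs x' y'.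
Proof.
move=> H x y x' y' hx hy; rewrite /sumcs; elim: cs H => [|c cs IH] H.
  by rewrite !big_nil.
rewrite !big_cons IH; last by move=> c0 h; apply: H; right.
by case: (H c (or_introl erefl)) => _ _ l1 l2 _; rewrite (l1 _ _ hx) (l2 _ _ hy).
Qed.

Lemma sumcs_inU L cs : (forall c, List.In c cs -> Pgood L c) ->
  forall u y, inU L u -> sumcs cs u y = 0.
Proof.
move=> H u y hu; rewrite /sumcs; elim: cs H => [|c cs IH] H.
  by rewrite !big_nil.
rewrite !big_cons IH; last by move=> c0 h; apply: H; right.
by case: (H c (or_introl erefl)) => _ _ _ _ z; rewrite z // mul0r addr0.
Qed.

Definition cutcs (j : I) (cs : seq ((A -> R) * (A -> R))) :=
  map (fun c => (fun x => c.1 (cut j x), fun y => c.2 (cut j y))) cs.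

Lemma sumcs_cut j cs x y : sumcs (cutcs j cs) x y = sumcs cs (cut j x) (cut j y).
Proof. by rewrite /sumcs /cutcs big_map. Qed.

Lemma homG1_cut j (F : A -> R) : homG1 F -> homG1 (fun x => F (cut j x)).
Proof.
move=> [hc ha]; split; last by move=> x y; rewrite cut_add ha.
move=> x; have [J HJ] := hc (cut j x); exists J => x' hx'.
apply: HJ => i hi; rewrite /cut; case: pselect => h0 //=; exact: hx'.
Qed.

Lemma Pgood_cut L j c : Pgood L c ->
  Pgood (j :: L) ((fun x => c.1 (cut j x)), (fun y => c.2 (cut j y))).
Proof.
case=> h1 h2 l1 l2 z; split => /=; try exact: homG1_cut.
- by move=> x y h; apply: l1; apply: agree_cons h.
- by move=> x y h; apply: l2; apply: agree_cons h.
- by move=> u h; apply: z; apply: cut_inU h.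
Qed.

Lemma cutcs_good L j cs : (forall c, List.In c cs -> Pgood L c) ->
  forall c, List.In c (cutcs j cs) -> Pgood (j :: L) c.
Proof.
move=> H c; rewrite /cutcs; elim: cs H => [|c0 cs IH] H //= [<-|h].
  by apply: Pgood_cut; apply: H; left.
by apply: IH => // c1 h1; apply: H; right.
Qed.

Lemma Pgood_hom L c : Pgood L c -> homG1 c.1 /\ homG1 c.2.
Proof. by case. Qed.

Lemma coord_good L j : List.In j L -> homG1 (fun y : A => y j) /\ loc L (fun y : A => y j).
Proof.
move=> hj; have hl : loc L (fun y : A => y j) by move=> x y h; apply: h.
by split => //; split => //; apply: loc_cont hl.
Qed.

Lemma Pgood_weak L L' c : (forall i, List.In i L -> List.In i L') -> Pgood L c -> Pgood L' c.
Proof.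
move=> hs [h1 h2 l1 l2 z]; split => //.
- by move=> x y h; apply: l1 => i hi; apply: h; apply: hs.
- by move=> x y h; apply: l2 => i hi; apply: h; apply: hs.
- by move=> u h; apply: z => i hi; apply: h; apply: hs.
Qed.

End CS.


Lemma In_flat (T U : Type) (K : T -> seq U) (l : seq T) j i :
  List.In j l -> List.In i (K j) -> List.In i (flatten (map K l)).
Proof.
elim: l => [|a l IH] //= [->|h] hi; apply: List.in_or_app; [left|right] => //.
exact: IH.
Qed.

Section Om.
Variables (I : Type) (q : nat).
Hypothesis Hq : (1 < q)%N.
Local Notation R := 'Z_q.
Local Notation A := (I -> 'Z_q).
Local Notation add := (@gadd I q).
Local Notation zero := (@gzero I q).
Local Notation e := (@e I q).
Variable f : A -> A -> R.
Hypothesis hcoc : cocycle2 add f.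
Hypothesis hcont : contG2 f.

Definition om (x y : A) := f x y - f y x.

Lemma om_addl : forall z, addF (fun x => om x z).
Proof.
move=> z x y; rewrite /om.
have C1 := hcoc x y z; have C2 := hcoc z x y; have C3 := hcoc x z y.
rewrite (gaddC z x) in C2; rewrite (gaddC z y) in C3.
have E1 : f (add x y) z = f y z + f x (add y z) - f x y.
  by rewrite -[LHS]addr0 -C1; ring.
have E2 : f z (add x y) = f (add x z) y - f x y + f z x.
  by rewrite -[LHS]subr0 -C2; ring.
have E3 : f (add x z) y = f z y + f x (add y z) - f x z.
  by rewrite -[LHS]addr0 -C3; ring.
rewrite E1 E2 E3; ring.
Qed.

Lemma om_anti x y : om y x = - om x y.
Proof. by rewrite /om opprB. Qed.

Lemma om_addr : forall x, addF (om x).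
Proof. by move=> x y z; rewrite (om_anti (add y z) x) (om_anti y x) (om_anti z x) om_addl opprD. Qed.

Lemma om_bilin : bilin om.
Proof. split; [exact: om_addl | exact: om_addr]. Qed.

Lemma om_xx x : om x x = 0.
Proof. by rewrite /om subrr. Qed.

Lemma om_0l y : om zero y = 0.
Proof. exact: (add_zero (om_addl y)). Qed.
Lemma om_0r y : om y zero = 0.
Proof. exact: (add_zero (om_addr y)). Qed.

Lemma exists_Lom : exists L, forall u, inU L u -> forall y, om u y = 0.
Proof.
have [J0 HJ0] := hcont zero zero.
pose ja j := proj1_sig (cid (hcont zero (e j))).
pose jb j := proj1_sig (cid (hcont (e j) zero)).
have Hja : forall j x' y', (forall i, List.In i (ja j) -> x' i = zero i /\ y' i = e j i) ->
   f x' y' = f zero (e j) by move=> j; rewrite /ja; case: cid.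
have Hjb : forall j x' y', (forall i, List.In i (jb j) -> x' i = e j i /\ y' i = zero i) ->
   f x' y' = f (e j) zero by move=> j; rewrite /jb; case: cid.
exists (J0 ++ flatten (map (fun j => ja j ++ jb j) J0)) => u hu.
have hu0 : inU J0 u := inU_catl hu.
have hin : forall j i, List.In j J0 -> List.In i (ja j ++ jb j) -> u i = 0.
  move=> j i hj hi; apply: hu; apply: List.in_or_app; right.
  exact: In_flat hj hi.
have hU : forall u', inU J0 u' -> om u u' = 0.
  move=> u' hu'; rewrite /om (HJ0 u u') ?(HJ0 u' u) ?subrr // => i hi.
    by rewrite hu' ?hu0.
  by rewrite hu' ?hu0.
have hE : forall j, List.In j J0 -> om u (e j) = 0.
  move=> j hj; rewrite /om (Hja j u (e j)); last first.
    by move=> i hi; split=> //; apply: (hin j) => //; apply: List.in_or_app; left.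
  rewrite (Hjb j (e j) u); last first.
    by move=> i hi; split=> //; apply: (hin j) => //; apply: List.in_or_app; right.
  exact: om_0l.
have hK : forall K, (forall j, List.In j K -> List.In j J0) -> forall y, om u (pr K y) = 0.
  elim=> [|j K IH] hK y; first by rewrite pr_nil om_0r.
  rewrite pr_cons om_addr (add_sing _ _ (om_addr u)) hE; last by apply: hK; left.
  by rewrite IH ?mulr0 ?add0r // => j0 h; apply: hK; right.
move=> y; rewrite (decomp J0 y) om_addr hK // hU ?addr0 //; exact: inU_sub.
Qed.

Fixpoint csg (L : seq I) : seq ((A -> R) * (A -> R)) :=
  match L with
  | [::] => [::]
  | j :: L' => ((fun x => om (pr L' (cut j x)) (e j)), (fun y : A => y j))
               :: cutcs j (csg L')
  end.

Lemma csg_good L : forall c, List.In c (csg L) -> Pgood L c.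
Proof.
elim: L => [|j L IH] c //= [<-|h]; last exact: cutcs_good IH _ h.
have [hc2 lc2] := @coord_good I q (j :: L) j (or_introl erefl).
have ha : addF (fun x => om (pr L (cut j x)) (e j)).
  by move=> x y; rewrite cut_add pr_add om_addl.
have hl : loc (j :: L) (fun x => om (pr L (cut j x)) (e j)).
  by move=> x y h; rewrite (pr_agree (agree_cons h)).
split => //=; first by split => //; apply: loc_cont hl.
by move=> u hu; rewrite (pr_inU (cut_inU hu)) om_0l.
Qed.

Lemma csg_om L : forall x y,
  sumcs (csg L) x y - sumcs (csg L) y x = om (pr L x) (pr L y).
Proof.
elim: L => [|j L IH] x y.
  by rewrite /sumcs !big_nil pr_nil om_0l subrr.
rewrite /sumcs !big_cons -!/(sumcs _ _ _) !sumcs_cut /=.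
rewrite !pr_cons om_addl !om_addr.
rewrite (add_sing _ _ (om_addl _)) (add_sing _ _ (om_addl _)).
rewrite (add_sing _ _ (om_addr _)) (add_sing _ _ (om_addr _)) om_xx.
rewrite (om_anti (e j) (pr L (cut j y))).
have := IH (cut j x) (cut j y); move=> E.
rewrite -E; ring.
Qed.

Lemma om_pr L : (forall u, inU L u -> forall y, om u y = 0) ->
  forall x y, om x y = om (pr L x) (pr L y).
Proof.
move=> hL x y.
rewrite {1}(decomp L x) om_addl (hL _ (@inU_sub _ _ L x)) addr0.
rewrite om_anti {1}(decomp L y) om_addl (hL _ (@inU_sub _ _ L y)) addr0.
by rewrite -om_anti.
Qed.

End Om.


Section Sym.
Variables (I : Type) (q : nat).
Hypothesis Hq : (1 < q)%N.
Local Notation R := 'Z_q.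
Local Notation A := (I -> 'Z_q).
Local Notation add := (@gadd I q).
Local Notation zero := (@gzero I q).
Local Notation e := (@e I q).
Variable h : A -> A -> R.
Hypothesis hcoc : cocycle2 add h.
Hypothesis hsym : forall x y, h x y = h y x.
Variable J : seq I.
Hypothesis hU : forall u u', inU J u -> inU J u' -> h u u' = 0.
Hypothesis hT : forall j, List.In j J -> \sum_(a < q) h (gscale (e j) a) (e j) = 0.

Lemma inU_zero L : inU L zero. Proof. by []. Qed.

Lemma h00 : h zero zero = 0.
Proof. by apply: hU. Qed.

Lemma h0l y : h zero y = 0.
Proof.
have := hcoc zero zero y; rewrite !gadd0l h00 => E.
by rewrite -[RHS]E; ring.
Qed.

Lemma h0r x : h x zero = 0.
Proof. by rewrite hsym h0l. Qed.

Definition mulE (a b : R * A) : R * A := (a.1 + b.1 + h a.2 b.2, add a.2 b.2).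
Definition oneE : R * A := (0, zero).

Lemma mulEA a b c : mulE a (mulE b c) = mulE (mulE a b) c.
Proof.
rewrite /mulE /= gaddA; congr (_, _).
have := hcoc a.2 b.2 c.2 => E.
rewrite -[LHS]subr0 -E; ring.
Qed.

Lemma mulEC a b : mulE a b = mulE b a.
Proof. by rewrite /mulE /= gaddC hsym; congr (_, _); ring. Qed.

Lemma mul1E a : mulE oneE a = a.
Proof. by case: a => m x; rewrite /mulE /= gadd0l h0l add0r addr0. Qed.

Lemma mulE1 a : mulE a oneE = a.
Proof. by rewrite mulEC mul1E. Qed.

Lemma mulEACA a b c d : mulE (mulE a b) (mulE c d) = mulE (mulE a c) (mulE b d).
Proof. by rewrite -!mulEA (mulEA b c d) (mulEC b c) -mulEA. Qed.

Definition pw (x : A) (n : nat) : R * A :=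
  (\sum_(a < n) h (gscale x a) x, gscale x n).

Lemma pw0 x : pw x 0 = oneE.
Proof. by rewrite /pw big_ord0 gscale0. Qed.

Lemma pwS x n : pw x n.+1 = mulE (pw x n) (0, x).
Proof.
rewrite /pw /mulE /= big_ord_recr /= addr0 gscaleS gaddC; congr (_, _).
Qed.

Lemma pwD x n m : pw x (n + m) = mulE (pw x n) (pw x m).
Proof.
elim: m => [|m IH]; first by rewrite addn0 pw0 mulE1.
by rewrite addnS !pwS IH mulEA.
Qed.

Lemma pwq j : List.In j J -> pw (e j) q = oneE.
Proof. by move=> hj; rewrite /pw hT // gscaleq. Qed.

Lemma pw_mulq j k : List.In j J -> pw (e j) (k * q) = oneE.
Proof.
move=> hj; elim: k => [|k IH]; first by rewrite mul0n pw0.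
by rewrite mulSn pwD IH pwq // mul1E.
Qed.

Lemma pw_mod j n : List.In j J -> pw (e j) (n %% q) = pw (e j) n.
Proof.
move=> hj; rewrite {2}(divn_eq n q) pwD pw_mulq // mul1E //.
Qed.

Lemma val_addZ (a b : R) : nat_of_ord (a + b)%R = ((nat_of_ord a + nat_of_ord b) %% q)%N.
Proof. exact: (f_equal (fun m => (nat_of_ord a + nat_of_ord b) %% m)%N (Zp_cast Hq)). Qed.

Lemma pw_addZ j (a b : R) : List.In j J ->
  pw (e j) (a + b)%R = mulE (pw (e j) a) (pw (e j) b).
Proof. by move=> hj; rewrite val_addZ pw_mod // pwD. Qed.

Fixpoint betaL (L : seq I) (x : A) : R :=
  match L with
  | [::] => 0
  | j :: L' => (mulE (pw (e j) (x j)) (betaL L' (cut j x), pr L' (cut j x))).1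
  end.

Definition sL L x : R * A := (betaL L x, pr L x).

Lemma sL_cons j L x : sL (j :: L) x = mulE (pw (e j) (x j)) (sL L (cut j x)).
Proof.
rewrite /sL /=; congr (_, _).
by rewrite /mulE /= pr_cons sing_scale.
Qed.

Lemma sL_hom L : (forall j, List.In j L -> List.In j J) ->
  forall x y, sL L (add x y) = mulE (sL L x) (sL L y).
Proof.
elim: L => [|j L IH] hL x y.
  by rewrite /sL /mulE /= !pr_nil gadd0 h00 !addr0.
rewrite !sL_cons cut_add IH; last by move=> i hi; apply: hL; right.
rewrite (pw_addZ (x j) (y j)) ; last by apply: hL; left.
by rewrite mulEACA.
Qed.

Lemma betaL_loc L : loc L (betaL L).
Proof.
elim: L => [|j L IH] x y hxy //=.
rewrite (hxy j (or_introl erefl)) (IH _ _ (agree_cons hxy)).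
by rewrite (pr_agree (agree_cons hxy)).
Qed.

Definition beta (x : A) : R := betaL J x + h (pr J x) (gsub x (pr J x)).

Lemma beta_E x : (beta x, x) = mulE (sL J x) (0, gsub x (pr J x)).
Proof. by rewrite /mulE /beta /sL /= addr0 -decomp. Qed.

Lemma beta_hom x y : h x y = beta (add x y) - beta x - beta y.
Proof.
have E : mulE (beta x, x) (beta y, y) = (beta (add x y), add x y).
  rewrite !beta_E mulEACA -sL_hom // /mulE /= hU; try exact: inU_sub.
  have Eu : add (gsub x (pr J x)) (gsub y (pr J y)) = gsub (add x y) (pr J (add x y)).
    by apply: funext => i; rewrite pr_add /gadd /gsub; ring.
  by rewrite !addr0 Eu.
have := congr1 fst E; rewrite /mulE /= => <-; ring.
Qed.

End Sym.


Section Fwd.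
Variables (I : Type) (q : nat).
Hypothesis Hq : (1 < q)%N.
Local Notation R := 'Z_q.
Local Notation A := (I -> 'Z_q).
Local Notation add := (@gadd I q).
Local Notation zero := (@gzero I q).
Local Notation e := (@e I q).

Lemma tiny (a b c : R) : a = 0 -> b = 0 -> c = a - b -> c = 0.
Proof. by move=> -> -> ->; rewrite subr0. Qed.

Lemma cocycle_sub (f1 f2 : A -> A -> R) : cocycle2 add f1 -> cocycle2 add f2 ->
  cocycle2 add (fun x y => f1 x y - f2 x y).
Proof. by move=> h1 h2 x y z; apply: (tiny (h1 x y z) (h2 x y z)); ring. Qed.

Lemma cocycle_const (c : R) : cocycle2 add (fun _ _ : A => c).
Proof. by move=> x y z; ring. Qed.

Lemma order_q_e j : order_q (e j).
Proof.
split; first exact: (gscaleq Hq).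
move=> k /andP[k0 kq] E; have := congr1 (fun v => v j) E.
rewrite /gscale /e /gzero /= selT // => /eqP.
rewrite -(inj_eq val_inj) /= (val_Zp_nat Hq) modn_small //.
by rewrite eqn0Ngt k0.
Qed.

Lemma gscale1 (x : A) : gscale x 1 = x.
Proof. by apply: funext => i; rewrite /gscale mulr1n. Qed.

Lemma Tf_zero (f : A -> A -> R) (d : nat) (g : A) :
  res_cyc_zero g (fun x y => f x y *+ d) ->
  (\sum_(a < q) f (gscale g a) g) *+ d = 0.
Proof.
move=> [b hb]; rewrite -sumrMnl.
have E : forall a : nat, b (gscale g a) + b (gscale g 1) - b (gscale g (a + 1)%N) =
   (b (gscale g a) - b (gscale g (a + 1)%N)) + b (gscale g 1) by move=> a; ring.
under eq_bigr => a _ do rewrite -{2}(gscale1 g) hb E.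
rewrite big_split /= sumr_const card_ord.
have -> : \sum_(i < q) (b (gscale g i) - b (gscale g (i + 1)%N)) =
          b (gscale g 0%N) - b (gscale g q).
  rewrite -(big_mkord xpredT (fun i => b (gscale g i) - b (gscale g (i + 1)%N))).
  rewrite (telescope_sumr_eq (fun i => - b (gscale g i))) //; first by ring.
  by move=> k _; rewrite addn1; ring.
by rewrite (gscaleq Hq) gscale0 subrr add0r (mulrn_q Hq).
Qed.


Definition Ssum : R := \sum_(a < q) (a%:R : R).

Lemma bilin_T (B : A -> A -> R) x : bilin B ->
  \sum_(a < q) B (gscale x a) x = B x x * Ssum.
Proof.
case=> hl _; rewrite /Ssum mulr_sumr; apply: eq_bigr => a _.
have := add_scale (hl x) x a; rewrite /= => ->.
by rewrite mulr_natr.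
Qed.

Fixpoint csG (kap : I -> R) (L : seq I) : seq ((A -> R) * (A -> R)) :=
  match L with
  | [::] => [::]
  | j :: L' => ((fun x : A => kap j * x j), (fun y : A => y j)) :: cutcs j (csG kap L')
  end.

Lemma csG_good kap L : forall c, List.In c (csG kap L) -> Pgood L c.
Proof.
elim: L => [|j L IH] c //= [<-|h]; last exact: cutcs_good IH _ h.
have [hc2 lc2] := @coord_good I q (j :: L) j (or_introl erefl).
have hl : loc (j :: L) (fun x : A => kap j * x j).
  by move=> x y hxy; rewrite (hxy j (or_introl erefl)).
split => //=.
  split; first exact: loc_cont hl.
  by move=> x y; rewrite /gadd mulrDr.
by move=> u hu; rewrite hu ?mulr0 //; left.
Qed.

Lemma csG_sym kap L : forall x y, sumcs (csG kap L) x y = sumcs (csG kap L) y x.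
Proof.
elim: L => [|j L IH] x y; first by rewrite /sumcs !big_nil.
rewrite /sumcs !big_cons -!/(sumcs _ _ _) !sumcs_cut IH /=; congr (_ + _); ring.
Qed.

Lemma sumcs_zero cs y : (forall c, List.In c cs -> homG1 c.1 /\ homG1 c.2) ->
  sumcs cs zero y = 0.
Proof. by move=> H; case: (sumcs_bilin H) => hl _; apply: (add_zero (hl y)). Qed.

Lemma cut_e j : cut j (e j) = zero.
Proof. by apply: funext => i; rewrite /cut /e; case: pselect. Qed.

Lemma cut_e_ne j j' : j' <> j -> cut j' (e j) = e j.
Proof.
move=> hne; apply: funext => i; rewrite /cut /e; case: (pselect (i = j')) => hij //=.
by rewrite selF // => E; apply: hne; rewrite -hij E.
Qed.

Lemma csG_ee kap L j : List.In j L -> sumcs (csG kap L) (e j) (e j) = kap j.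
Proof.
elim: L => [|j' L IH] // hj.
rewrite /sumcs big_cons -/(sumcs _ _ _) sumcs_cut /=.
case: (pselect (j' = j)) => [->|hne].
  rewrite cut_e sumcs_zero; last by move=> c hc; apply: Pgood_hom (csG_good hc).
  by rewrite /e selT // mulr1 mulr1 addr0.
rewrite cut_e_ne // IH; last by case: hj.
by rewrite /e selF ?mulr0 ?add0r // => E; apply: hne.
Qed.

Theorem forward (d : nat) (HdS : Ssum *+ d = 0)
  (Hk : forall t : R, t *+ d = 0 -> exists k, t = k * Ssum)
  (f : A -> A -> R) : contG2 f -> cocycle2 add f ->
  (forall g, order_q g -> res_cyc_zero g (fun x y => f x y *+ d)) ->
  decomposable f.
Proof.
move=> hcont hcoc hres.
have [L HL] := exists_Lom hcoc hcont.
pose g := sumcs (csg f L).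
have gG : forall c, List.In c (csg f L) -> Pgood L c := fun c hc => csg_good hcoc hc.
have gH : forall c, List.In c (csg f L) -> homG1 c.1 /\ homG1 c.2 :=
  fun c hc => Pgood_hom (gG c hc).
have gB : bilin g := sumcs_bilin gH.
pose c0 := f zero zero.
have [J0 HJ0] := hcont zero zero.
pose J := J0 ++ L.
pose h0 x y := f x y - g x y - c0.
have h0coc : cocycle2 add h0 :=
  cocycle_sub (cocycle_sub hcoc (bilin_cocycle gB)) (cocycle_const c0).
have h0sym : forall x y, h0 x y = h0 y x.
  move=> x y; rewrite /h0.
  have E : f x y - f y x = g x y - g y x.
    by rewrite (csg_om hcoc L x y) -(om_pr hcoc HL x y).
  have -> : f x y = g x y - g y x + f y x by rewrite -E; ring.
  ring.
have hUJ : forall u u', inU J u -> inU J u' -> h0 u u' = 0.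
  move=> u u' hu hu'.
  have Eg : g u u' = 0 := sumcs_inU gG u' (inU_catr hu).
  rewrite /h0 Eg (HJ0 u u') ?subr0 ?subrr // => i hi.
  by rewrite /gzero (inU_catl hu) ?(inU_catl hu').
pose t j := \sum_(a < q) h0 (gscale (e j) a) (e j).
have ht : forall j, t j *+ d = 0.
  move=> j; rewrite /t /h0 !sumrB sumr_const card_ord (mulrn_q Hq) subr0.
  rewrite (bilin_T (e j) gB) mulrnBl (Tf_zero (hres _ (order_q_e j))).
  by rewrite -mulrnAr HdS mulr0 subrr.
pose kap j := match pselect (exists k, t j = k * Ssum) with
  | left H => sval (cid H) | right _ => 0 end.
have hkap : forall j, t j = kap j * Ssum.
  move=> j; rewrite /kap; case: pselect => [H|H]; last by exfalso; apply: H; apply: Hk.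
  by case: (cid H).
pose G := sumcs (csG kap J).
have GG : forall c, List.In c (csG kap J) -> Pgood J c := fun c hc => csG_good hc.
have GH : forall c, List.In c (csG kap J) -> homG1 c.1 /\ homG1 c.2 :=
  fun c hc => Pgood_hom (GG c hc).
have GB : bilin G := sumcs_bilin GH.
pose h1 x y := h0 x y - G x y.
have h1coc : cocycle2 add h1 := cocycle_sub h0coc (bilin_cocycle GB).
have h1sym : forall x y, h1 x y = h1 y x.
  by move=> x y; rewrite /h1 h0sym /G csG_sym.
have h1U : forall u u', inU J u -> inU J u' -> h1 u u' = 0.
  move=> u u' hu hu'.
  have EG : G u u' = 0 := sumcs_inU GG u' hu.
  by rewrite /h1 hUJ // EG subr0.
have h1T : forall j, List.In j J -> \sum_(a < q) h1 (gscale (e j) a) (e j) = 0.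
  move=> j hj; rewrite /h1 sumrB -/(t j) (bilin_T (e j) GB) /G csG_ee //.
  by rewrite hkap subrr.
have Hb := beta_hom Hq h1coc h1sym h1U h1T.
exists (csg f L ++ csG kap J), (fun x => c0 - beta h1 J x); split.
- move=> c hc; case: (List.in_app_or _ _ _ hc) => hc'; [exact: gH | exact: GH].
- move=> x.
  have [K HK] := hcont (pr J x) (gsub x (pr J x)).
  exists (J ++ K) => x' hx'.
  have hJK : agree (J ++ K) x' x by [].
  have hJ : agree J x' x := agree_catl hJK.
  have Epr : pr J x' = pr J x := pr_agree hJ.
  rewrite /beta Epr (betaL_loc h1 hJ).
  have hu : agree (J ++ K) (gsub x' (pr J x)) (gsub x (pr J x)).
    by move=> i hi; rewrite /gsub hx'.
  have hL : agree L (gsub x' (pr J x)) (gsub x (pr J x)).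
    by move=> i hi; apply: hu; apply: List.in_or_app; left; apply: List.in_or_app; right.
  have hJ' : agree J (gsub x' (pr J x)) (gsub x (pr J x)) := agree_catl hu.
  have Ef : f (pr J x) (gsub x' (pr J x)) = f (pr J x) (gsub x (pr J x)).
    by apply: HK => i hi; split => //; apply: hu; apply: List.in_or_app; right.
  have Eg : g (pr J x) (gsub x' (pr J x)) = g (pr J x) (gsub x (pr J x)).
    by apply: (sumcs_loc gG) => //.
  have EG : G (pr J x) (gsub x' (pr J x)) = G (pr J x) (gsub x (pr J x)).
    by apply: (sumcs_loc GG) => //.
  by rewrite /h1 /h0 Ef Eg EG.
- move=> x y; rewrite big_cat /= -/(sumcs _ x y) -/(sumcs _ x y) -/g -/G.
  have E := Hb x y; rewrite /h1 /h0 in E.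
  have Ef : f x y = (f x y - g x y - c0 - G x y) + g x y + c0 + G x y by ring.
  rewrite {1}Ef E; ring.
Qed.

End Fwd.


Section Arith.
Variable q : nat.
Hypothesis Hq : (1 < q)%N.
Local Notation R := 'Z_q.

Lemma Ssum_bin : @Ssum q = ('C(q, 2))%:R.
Proof.
rewrite /Ssum -natr_sum -bin2_sum; congr (_%:R).
by rewrite big_mkord.
Qed.

Lemma Ssum_odd : odd q -> @Ssum q = 0.
Proof.
move=> hq; rewrite Ssum_bin bin2odd // natrM (qR0 Hq) mul0r //.
Qed.

Lemma Ssum_even m : q = (m.*2)%N -> (0 < m)%N -> @Ssum q = m%:R.
Proof.
move=> hq hm; rewrite Ssum_bin bin2.
have -> : (q * q.-1 = (m * q.-1).*2)%N by rewrite {1}hq -!muln2 mulnAC.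
rewrite doubleK natrM.
have h1 : (1 <= q)%N by apply: ltnW.
have -> : (q.-1%:R : R) = -1.
  by rewrite -subn1 natrB // (qR0 Hq) sub0r.
have hm2 : (m%:R + m%:R : R) = 0 by rewrite -natrD addnn -hq (qR0 Hq).
by rewrite mulrN1 -[RHS]subr0 -hm2; ring.
Qed.

Lemma half_even_k m (t : R) : q = (m.*2)%N -> (0 < m)%N -> t *+ 2 = 0 ->
  exists k, t = k * m%:R.
Proof.
move=> hq hm ht.
pose v := nat_of_ord t.
have ht' : ((v * 2)%:R : R) = 0 by rewrite natrM natr_Zp mulr_natr.
have E1 : ((v * 2) %% q = 0)%N.
  by have := congr1 (@nat_of_ord _) ht'; rewrite (val_Zp_nat Hq).
have Et : t = v%:R by rewrite natr_Zp.
clearbody v; rewrite Et; clear Et ht ht'.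
rewrite hq in E1; move/eqP: E1; rewrite -/(dvdn _ _) -muln2 dvdn_pmul2r //.
by move=> /dvdnP [k ->]; exists k%:R; rewrite natrM.
Qed.

End Arith.

Unset Implicit Arguments.

Theorem corollary10p7 (p s : nat) (T : topologicalType)
    (mul : T -> T -> T) (inv : T -> T) (one : T)
    (I : Type) (pi : T -> I -> 'Z_(p ^ s)) :
  prime p -> (0 < s)%N ->
  is_profinite_group mul inv one ->
  H2_vanishes mul (p ^ s) ->
  S2_quotient_map mul inv one pi ->
  forall f : (I -> 'Z_(p ^ s)) -> (I -> 'Z_(p ^ s)) -> 'Z_(p ^ s),
    contG2 f -> cocycle2 (@gadd I (p ^ s)) f ->
    ((forall g : I -> 'Z_(p ^ s), order_q g ->
        res_cyc_zero g (fun x y => f x y *+ delta p))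
     <-> decomposable f).
Proof.
move=> hp hs _ _ _ f hcont hcoc.
have p1 : (1 < p)%N := prime_gt1 hp.
have Hq : (1 < p ^ s)%N.
  by apply: (leq_trans p1); rewrite -{1}(expn1 p) leq_pexp2l // ltnW.
case: (boolP (p == 2%N)) => [/eqP hp2 | hp2].
-
  have hd : delta p = 2%N by rewrite /delta hp2.
  rewrite hd.
  have hm : (0 < 2 ^ s.-1)%N by rewrite expn_gt0.
  have hq : (p ^ s = (2 ^ s.-1).*2)%N by rewrite hp2 -mul2n -expnS prednK.
  split.
  + apply: (forward Hq (d := 2)) => //.
    * by rewrite (Ssum_even Hq hq hm) mulr2n -natrD addnn -hq (qR0 Hq).
    * by move=> t ht; rewrite (Ssum_even Hq hq hm); apply: (half_even_k Hq hq hm).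
  + apply: (backward Hq (h2 := 1)); by [].
- have hd : delta p = 1%N by rewrite /delta (negbTE hp2).
  rewrite hd.
  have hpo : odd p.
    by case: (even_prime hp) => // E; rewrite E in hp2.
  have hqo : odd (p ^ s) by rewrite oddX hpo orbT.
  split.
  + apply: (forward Hq (d := 1)) => //.
    * by rewrite (Ssum_odd Hq hqo).
    * by move=> t ht; exists 0; rewrite mul0r -[t]mulr1n.
  + apply: (backward Hq (h2 := (((p ^ s).+1)./2)%:R)).
    set n := ((p ^ s).+1./2)%N.
    rewrite mulr2n -natrD addnn.
    have E := odd_double_half (p ^ s).+1.
    have Eo : odd (p ^ s).+1 = false by rewrite oddS hqo.
    rewrite Eo add0n in E.
    by rewrite /n E mulrS (qR0 Hq) addr0.
Qed.
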